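(* If $\mathbf M\in\mathcal M_1$ and $\mathbf F(\mathbf s)\neq\mathbf M\mathbf s$, then for each $i\in\mathbb N$ there exists $n=n(i)$ such that $$F_i(n;\mathbf 0)=\mathbb P\big(\|\mathbf Z_i(n)\|_1=0\big)>0.$$
   Context: A GWBP/$\infty$ has types $\mathbb N=\{1,2,\dots\}$. Each particle lives one unit of time; a type-$i$ particle produces, independently of everything else, a random vector $\mathbf Z_i=(Z_{ij})_{j\in\mathbb N}$ of children, with $Z_i:=\sum_jZ_{ij}<\infty$ a.s. $\mathbf Z_i(n)=(Z_{ij}(n))_j$ is the generation-$n$ population from one type-$i$ particle, $\|\mathbf Z_i(n)\|_1=\sum_jZ_{ij}(n)$. $F_i(n;\mathbf s)=\mathbb E\prod_js_j^{Z_{ij}(n)}$, $F_i(\mathbf s)=F_i(1;\mathbf s)$; ''$\mathbf F(\mathbf s)\neq\mathbf M\mathbf s$'' means it is not true that $F_i(\mathbf s)=\sum_jM_{ij}s_j$ for all $i,\mathbf s$. Mean matrix $\mathbf M=(M_{ij})$, $M_{ij}=\mathbb EZ_{ij}$, $M^{(n)}_{ij}=\mathbb EZ_{ij}(n)$, $M_i=\sum_jM_{ij}$. Irreducible: for all $i,j$ some $M^{(n)}_{ij}>0$; aperiodic: gcd of such $n$ is 1; then $\lim_n(M^{(n)}_{ij})^{1/n}=1/R$ for a common $R$. $\mathbf M\in\mathcal M_1$ means: (i) irreducible, aperiodic, $R=1$, 1-recurrent ($\sum_nM^{(n)}_{ij}=\infty$) and 1-positive ($\lim_nM^{(n)}_{ij}>0$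 for all $i,j$); then there are positive eigenvectors $\mathbf v\mathbf M=\mathbf v$, $\mathbf M\mathbf u^T=\mathbf u^T$, unique up to positive multiples, normalized with $\sum_jv_ju_j=1$; (ii) $\sum_jv_j=1$ and $\sup_iu_i<\infty$; (iii) $\lim_{N\to\infty}\sup_iM_i^{-1}\sum_{j>N}M_{ij}=0$ and $\lim_{K\to\infty}\sup_iM_i^{-1}\mathbb E[Z_i;Z_i>K]=0$. *)

(* Defs.v *)
From HB Require Import structures.
From mathcomp Require Import all_boot all_order all_algebra.
From mathcomp Require Import all_classical all_reals all_analysis.
Set Implicit Arguments. Unset Strict Implicit. Unset Printing Implicit Defensive.
Import Order.TTheory GRing.Theory Num.Theory.
Import numFieldNormedType.Exports.
Local Open Scope classical_set_scope.
Local Open Scope ring_scope.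

(* Types are indexed by nat (0-based; a relabelling of N = {1,2,...}).
   An offspring vector (Z_ij)_j with finite total Z_i is encoded by a finite
   sequence x : seq nat with Z_ij = nth 0 x j (trailing zeros irrelevant). *)

Section GW.
Variable R : realType.
Variable p : nat -> seq nat -> R.

Definition offspring_law : Prop :=
  forall i, (forall x, 0 <= p i x) /\ (\esum_(x in [set: seq nat]) (p i x)%:E = 1%E).

Definition genF (i : nat) (s : nat -> R) : R :=
  fine (\esum_(x in [set: seq nat]) (p i x * \prod_(j < size x) s j ^+ nth 0 x j)%:E).

Fixpoint genFn (n : nat) (i : nat) (s : nat -> R) : R :=
  match n with
  | 0 => s i
  | n'.+1 => genF i (fun j => genFn n' j s)
  end.

Definition meanM (i j : nat) : \bar R :=
  (\esum_(x in [set: seq nat]) (p i x * (nth 0 x j)%:R)%:E)%E.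

Definition meanRow (i : nat) : \bar R := (\sum_(j <oo) meanM i j)%E.

Fixpoint meanMn (n : nat) (i j : nat) : \bar R :=
  match n with
  | 0 => ((i == j)%:R)%:E
  | n'.+1 => (\sum_(k <oo) (meanMn n' i k * meanM k j))%E
  end.

Definition rowTail (i N : nat) : \bar R := (\sum_(N <= j <oo) meanM i j)%E.

Definition truncMean (i K : nat) : \bar R :=
  (\esum_(x in [set: seq nat])
     (p i x * (sumn x)%:R * (K < sumn x)%:R)%:E)%E.

Definition irreducible : Prop :=
  forall i j, exists n, (0 < n)%N /\ (0 < meanMn n i j)%E.

Definition aperiodic : Prop :=
  forall i (d : nat), (forall n, (0 < n)%N -> (0 < meanMn n i i)%E -> (d %| n)%N) -> d = 1%N.

(* lim_n (M^(n)_ij)^{1/n} = 1/R with R = 1 *)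
Definition conv_radius_one : Prop :=
  forall i j, (fun n : nat => poweR (meanMn n i j) (n%:R)^-1) @ \oo --> 1%E.

Definition one_recurrent : Prop :=
  forall i j, (\sum_(n <oo) meanMn n i j)%E = +oo%E.

Definition one_positive : Prop :=
  forall i j, exists l : \bar R, (0 < l)%E /\ (fun n => meanMn n i j) @ \oo --> l.

Definition eigen_cond : Prop :=
  exists v u : nat -> R,
    (forall j, 0 < v j) /\ (forall i, 0 < u i) /\
    (forall j, (\sum_(i <oo) ((v i)%:E * meanM i j))%E = (v j)%:E) /\
    (forall i, (\sum_(j <oo) (meanM i j * (u j)%:E))%E = (u i)%:E) /\
    (\sum_(j <oo) (v j * u j)%:E)%E = 1%E /\
    (\sum_(j <oo) (v j)%:E)%E = 1%E /\
    (exists B : R, forall i, u i <= B).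

(* (iii): the ratios M_i^{-1} (...) presuppose 0 < M_i < oo *)
Definition uniform_cond : Prop :=
  [/\ forall i, (meanRow i < +oo)%E,
      (fun N : nat => ereal_sup [set ((fine (rowTail i N)) / fine (meanRow i))%:E | i in [set: nat]])
         @ \oo --> 0%E
    & (fun K : nat => ereal_sup [set ((fine (truncMean i K)) / fine (meanRow i))%:E | i in [set: nat]])
         @ \oo --> 0%E].

Definition in_M1 : Prop :=
  irreducible /\ aperiodic /\ conv_radius_one /\ one_recurrent /\
  one_positive /\ eigen_cond /\ uniform_cond.

Definition F_linear : Prop :=
  forall i (s : nat -> R), (forall j, 0 <= s j <= 1) ->
    ((genF i s)%:E = \sum_(j <oo) (meanM i j * (s j)%:E))%E.

End GW.

(* Main.v *)
Require Import Defs.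
From HB Require Import structures.
From mathcomp Require Import all_boot all_order all_algebra.
From mathcomp Require Import all_classical all_reals all_analysis.
From mathcomp Require Import lra.
Import Order.TTheory GRing.Theory Num.Theory.

Module P1.
Local Open Scope classical_set_scope.
Local Open Scope ring_scope.

Section Helpers.
Variable R : realType.
Local Open Scope ereal_scope.

Lemma esumZl (T : choiceType) (S : set T) (r : R) (a : T -> \bar R) :
  (0 <= r)%R -> (forall x, 0 <= a x) ->
  \esum_(x in S) (r%:E * a x) = r%:E * \esum_(x in S) a x.
Proof.
move=> r0 a0; rewrite /esum -ereal_supZl //; last first.
  by apply/set0P; exists 0; exists set0; [exact: fsets_set0|rewrite fsbig_set0].
congr ereal_sup; apply/seteqP; split => y /=.
  move=> [A fsA <-]; exists (\sum_(x \in A) a x); first by exists A.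
  by rewrite ge0_mule_fsumr.
move=> [z [A fsA <-] <-]; exists A => //; by rewrite ge0_mule_fsumr.
Qed.

Lemma esum_swapQ (T : choiceType) (Q : pred nat) (f : T -> nat -> \bar R) :
  (forall x j, 0 <= f x j) ->
  \sum_(j <oo | Q j) \esum_(x in [set: T]) f x j =
  \esum_(x in [set: T]) \sum_(j <oo | Q j) f x j.
Proof.
move=> f0; rewrite nneseries_esum; last by move=> n _; exact: esum_ge0.
under [RHS]eq_esum do rewrite nneseries_esum//.
rewrite !esum_esum//.
rewrite (reindex_esum ([set: T] `*`` (fun=> [set x | Q x])) _ (fun x => (x.2, x.1)))//.
split=> //=.
- by move=> [i j] [/=].
- by move=> [i1 i2] [j1 j2] /= _ _ [] -> ->.
- by move=> [i1 i2] [Pi1 Qi2] /=; exists (i2, i1).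
Qed.

Lemma term_le_series (f : nat -> \bar R) (P : pred nat) j :
  (forall k, P k -> 0 <= f k) -> P j -> f j <= \sum_(k <oo | P k) f k.
Proof.
move=> f0 Pj; rewrite (@nneseriesD1 R f j P)//; apply: leeDl.
by apply: nneseries_ge0 => n _ /andP[/f0].
Qed.

End Helpers.

End P1.
Import P1.

Module P2.
Local Open Scope classical_set_scope.
Local Open Scope ring_scope.

Section GenF.
Variable R : realType.
Variable p : nat -> seq nat -> R.
Hypothesis hp : offspring_law p.

Definition s01 (s : nat -> R) := forall j, 0 <= s j <= 1.

Lemma prod01 (s : nat -> R) (x : seq nat) : s01 s ->
  0 <= \prod_(j < size x) s j ^+ nth 0 x j <= 1.
Proof.
move=> hs; apply/andP; split.
  by apply: prodr_ge0 => j _; apply: exprn_ge0; case/andP: (hs j).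
apply: prodr_ile1 => j _; case/andP: (hs j) => h0 h1.
by rewrite exprn_ge0 // exprn_ile1.
Qed.

Lemma genF_E i s : s01 s ->
  (genF p i s)%:E = (\esum_(x in [set: seq nat]) (p i x * \prod_(j < size x) s j ^+ nth 0 x j)%:E)%E
  /\ 0 <= genF p i s <= 1.
Proof.
move=> hs; have [p0 p1] := hp i.
set E := (\esum_(x in _) _)%E.
have E0 : (0 <= E)%E.
  apply: esum_ge0 => x _; rewrite lee_fin mulr_ge0 //.
  by case/andP: (prod01 _ x hs).
have E1 : (E <= 1)%E.
  rewrite -p1; apply: le_esum => x _; rewrite lee_fin.
  case/andP: (prod01 _ x hs) => _ h1.
  by rewrite -[leRHS]mulr1 ler_wpM2l.
have Efin : E \is a fin_num by rewrite ge0_fin_numE // (le_lt_trans E1) // ltry.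
rewrite /genF -/E fineK //; split => //.
by rewrite -lee_fin -(lee_fin _ 1) fineK // E0 E1.
Qed.

Lemma genF_mono i s t : s01 s -> s01 t -> (forall j, s j <= t j) ->
  genF p i s <= genF p i t.
Proof.
move=> hs ht hst; rewrite -lee_fin (proj1 (genF_E i _ hs)) (proj1 (genF_E i _ ht)).
apply: le_esum => x _; rewrite lee_fin ler_wpM2l //; first by case: (hp i).
apply: ler_prod => j _; case/andP: (hs j) => h0 _.
by rewrite exprn_ge0 //= lerXn2r // nnegrE (le_trans h0).
Qed.

Definition q n j := genFn p n j (fun _ => 0).

Lemma q01 n : s01 (q n).
Proof.
elim: n => [|n IH] j; first by rewrite /q /= lexx ler01.
exact: (proj2 (genF_E j _ IH)).
Qed.

Lemma q_mono n j : q n j <= q n.+1 j.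
Proof.
elim: n j => [|n IH] j; first by case/andP: (q01 1 j).
exact: (genF_mono j _ _ (q01 n) (q01 n.+1) IH).
Qed.

Lemma q_mono_le m n j : (m <= n)%N -> q m j <= q n j.
Proof.
move=> /subnK <-; elim: (n - m)%N => [|k IH]; first by rewrite add0n.
exact: le_trans IH (q_mono _ _).
Qed.

End GenF.
Arguments s01 {R}.
Arguments q {R}.
Arguments prod01 {R s}.
Arguments genF_E {R p} hp i {s}.
Arguments genF_mono {R p} hp i {s t}.
Arguments q01 {R p} hp.
Arguments q_mono_le {R p} hp {m n} j.

End P2.
Import P2.

Module P3.
Local Open Scope classical_set_scope.
Local Open Scope ring_scope.

Lemma esum_term (R : realType) (T : choiceType) (a : T -> \bar R) x :
  (forall y, (0 <= a y)%E) -> (a x <= \esum_(y in [set: T]) a y)%E.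
Proof.
move=> a0; apply: esum_ge; exists [set x]; first by split => //; exact: finite_set1.
by rewrite fsbig_set1.
Qed.

Section DSet.
Variable R : realType.
Variable p : nat -> seq nat -> R.
Hypothesis hp : offspring_law p.

Lemma genF_zero i s x : s01 s -> genF p i s = 0 -> 0 < p i x ->
  exists j, (j < size x)%N /\ (0 < nth 0 x j)%N /\ s j = 0.
Proof.
move=> hs g0 px.
have [E _] := genF_E hp i hs.
rewrite g0 in E.
have := @esum_term R _ (fun x => (p i x * \prod_(j < size x) s j ^+ nth 0 x j)%:E) x.
rewrite -E lee_fin => /(_ _) h.
have {h} h : p i x * \prod_(j < size x) s j ^+ nth 0 x j <= 0.
  apply: h => y; rewrite lee_fin mulr_ge0 //; first by case: (hp i).
  by case/andP: (prod01 y hs).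
have pr0 : \prod_(j < size x) s j ^+ nth 0 x j = 0.
  apply/eqP; rewrite eq_le; apply/andP; split; last by case/andP: (prod01 x hs).
  by rewrite -(pmulr_rle0 _ px).
move/eqP: pr0 => /prodf_eq0 [j _].
rewrite expf_eq0 => /andP [xj /eqP sj].
by exists j; split => //.
Qed.

Definition Dset : set nat := fun j => forall n, q p n j = 0.

Lemma unif_pos (x : seq nat) m :
  (forall j, (j < m)%N -> (0 < nth 0 x j)%N -> ~ Dset j) ->
  exists N, forall j, (j < m)%N -> (0 < nth 0 x j)%N -> 0 < q p N j.
Proof.
elim: m => [|m IH] H; first by exists 0%N.
have [|N HN] := IH; first by move=> j jm; apply: H; exact: ltnW.
have [xm|xm] := posnP (nth 0 x m); last first.
  have /H/(_ xm) := ltnSn m.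
  move=> /existsNP [n qn].
  have qn0 : 0 < q p n m by rewrite lt0r; apply/andP; split; [apply/eqP; exact: qn|case/andP: (q01 hp n m)].
  exists (maxn N n) => j; rewrite ltnS leq_eqVlt => /orP [/eqP -> _|jm xj].
    exact: lt_le_trans qn0 (q_mono_le hp _ (leq_maxr _ _)).
  exact: lt_le_trans (HN j jm xj) (q_mono_le hp _ (leq_maxl _ _)).
exists N => j; rewrite ltnS leq_eqVlt => /orP [/eqP -> |jm xj]; first by rewrite xm.
exact: HN.
Qed.

Lemma D_child k x : Dset k -> 0 < p k x ->
  exists j, (0 < nth 0 x j)%N /\ Dset j.
Proof.
move=> Dk px; apply: contrapT => H.
have [|N HN] := @unif_pos x (size x).
  by move=> j _ xj Dj; apply: H; exists j.
have := Dk N.+1; rewrite /q /= => g0.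
have [j [js [xj qj]]] := genF_zero k _ x (q01 hp N) g0 px.
by move: (HN j js xj); rewrite qj ltxx.
Qed.

End DSet.
Arguments D_child {R p} hp {k x}.

End P3.
Import P3.

Module P4.
Local Open Scope classical_set_scope.
Local Open Scope ring_scope.
Local Open Scope ereal_scope.

Lemma series_eq_pt (R : realType) (a b : nat -> \bar R) :
  (forall k, 0 <= a k) -> (forall k, a k <= b k) ->
  \sum_(k <oo) b k = \sum_(k <oo) a k -> \sum_(k <oo) a k < +oo ->
  forall k, a k = b k.
Proof.
move=> a0 ab Hs Ha k.
have afin i : a i \is a fin_num.
  rewrite ge0_fin_numE // (le_lt_trans _ Ha) //.
  by apply: (@term_le_series R a xpredT i) => // *.
have Sa0 : 0 <= \sum_(k <oo) a k by apply: nneseries_ge0.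
have Safin : \sum_(k <oo) a k \is a fin_num by rewrite ge0_fin_numE.
pose c i := b i - a i.
have c0 i : 0 <= c i by rewrite /c sube_ge0 ?afin.
have bE : \sum_(k <oo) b k = \sum_(k <oo) a k + \sum_(k <oo) c k.
  rewrite -nneseriesD //; apply: eq_eseriesr => i _.
  by rewrite /c addeC subeK.
have Sc : \sum_(k <oo) c k = 0.
  have C0 : 0 <= \sum_(k <oo) c k by apply: nneseries_ge0.
  move: Hs Safin C0; rewrite bE.
  case: (\sum_(k <oo) a k) => [x| |] //; case: (\sum_(k <oo) c k) => [y| |] // H _ y0.
  move: H; rewrite -EFinD => /eqP; rewrite eqe => /eqP H.
  by congr (_%:E); lra.
have : c k <= 0 by rewrite -Sc; apply: (@term_le_series R c xpredT k) => // *.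
move=> ck; have : c k = 0 by apply/eqP; rewrite eq_le ck c0.
move=> ck0; have : b k = a k + c k by rewrite /c addeC subeK.
by rewrite ck0 adde0.
Qed.

End P4.
Import P4.

Module P5.
Local Open Scope classical_set_scope.
Local Open Scope ring_scope.
Local Open Scope ereal_scope.

Lemma esum_eq_pt (R : realType) (T : choiceType) (a b : T -> \bar R) :
  (forall k, 0 <= a k) -> (forall k, a k <= b k) ->
  \esum_(k in [set: T]) b k = \esum_(k in [set: T]) a k ->
  \esum_(k in [set: T]) a k < +oo ->
  forall k, a k = b k.
Proof.
move=> a0 ab Hs Ha k.
have afin i : a i \is a fin_num.
  by rewrite ge0_fin_numE // (le_lt_trans _ Ha) // esum_term.
have Sa0 : 0 <= \esum_(k in [set: T]) a k by apply: esum_ge0.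
have Safin : \esum_(k in [set: T]) a k \is a fin_num by rewrite ge0_fin_numE.
pose c i := b i - a i.
have c0 i : 0 <= c i by rewrite /c sube_ge0 ?afin.
have bE : \esum_(k in [set: T]) b k = \esum_(k in [set: T]) a k + \esum_(k in [set: T]) c k.
  rewrite -esumD //; apply: eq_esum => i _.
  by rewrite /c addeC subeK.
have Sc : \esum_(k in [set: T]) c k = 0.
  have C0 : 0 <= \esum_(k in [set: T]) c k by apply: esum_ge0.
  move: Hs Safin C0; rewrite bE.
  case: (\esum_(k in [set: T]) a k) => [x| |] //; case: (\esum_(k in [set: T]) c k) => [y| |] // H _ y0.
  move: H; rewrite -EFinD => /eqP; rewrite eqe => /eqP H.
  by congr (_%:E); lra.
have : c k <= 0 by rewrite -Sc; apply: esum_term.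
move=> ck; have ck0 : c k = 0 by apply/eqP; rewrite eq_le ck c0.
have : b k = a k + c k by rewrite /c addeC subeK.
by rewrite ck0 adde0.
Qed.

Lemma series_fin (R : realType) (f : nat -> R) n :
  (forall j, (n <= j)%N -> f j = 0%R) -> (forall j, (0 <= f j)%R) ->
  \sum_(j <oo) (f j)%:E = (\sum_(j < n) f j)%:E.
Proof.
move=> fz f0.
rewrite (@nneseries_split R (fun j => (f j)%:E) 0 n); last by move=> k _; rewrite lee_fin.
rewrite add0n eseries0; last by move=> i ni _; rewrite fz.
by rewrite adde0 sumEFin big_mkord.
Qed.

Lemma sumn_ord (x : seq nat) : sumn x = (\sum_(j < size x) nth 0 x j)%N.
Proof. by rewrite sumnE (big_nth 0%N) big_mkord. Qed.

Lemma prod_sum (R : realType) (x : seq nat) (s : nat -> R) : sumn x = 1%N ->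
  (\prod_(j < size x) s j ^+ nth 0 x j = \sum_(j < size x) (nth 0 x j)%:R * s j)%R.
Proof.
elim: x s => [|a x IH] s //= hx.
rewrite !big_ord_recl /=.
case: a hx => [|[|a]] hx.
- rewrite add0n in hx.
  by rewrite expr0 mul1r mul0r add0r (IH (fun j => s j.+1)).
- have x0 : sumn x = 0%N by move: hx; rewrite add1n => -[].
  have nx j : nth 0%N x j = 0%N.
    have [jl|jl] := ltnP j (size x); last by rewrite nth_default.
    by apply/eqP; move/eqP: x0; rewrite sumn_ord sum_nat_eq0 => /forallP /(_ (Ordinal jl)).
  rewrite expr1 mul1r big1 ?big1 ?mulr1 ?addr0 //.
    by move=> j _; rewrite /bump /= nx mul0r.
  by move=> j _; rewrite /bump /= nx expr0.
- by move: hx; rewrite !addSn.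
Qed.

End P5.
Import P5.

Module P6.
Local Open Scope classical_set_scope.
Local Open Scope ring_scope.

Section Main.
Variable R : realType.
Variable p : nat -> seq nat -> R.
Hypothesis hp : offspring_law p.
Variable v : nat -> R.
Hypothesis hv0 : forall j, 0 < v j.
Hypothesis hvM : forall j, (\sum_(i <oo) ((v i)%:E * meanM p i j))%E = (v j)%:E.
Hypothesis hv1 : (\sum_(j <oo) (v j)%:E)%E = 1%E.

Local Open Scope ereal_scope.

Let D := Dset R p.

Lemma meanM_ge0 i j : 0 <= meanM p i j.
Proof.
apply: esum_ge0 => x _; rewrite lee_fin mulr_ge0 //; first by case: (hp i).
Qed.

Definition w k := \sum_(j <oo | j \in D) meanM p k j.

Lemma w_swap k : w k =
  \esum_(x in [set: seq nat]) \sum_(j <oo | j \in D) (p k x * (nth 0 x j)%:R)%:E.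
Proof.
rewrite /w /meanM esum_swapQ // => x j; rewrite lee_fin mulr_ge0 //.
by case: (hp k).
Qed.

Lemma w_ge1 k : D k -> 1 <= w k.
Proof.
move=> Dk; rewrite w_swap; have [p0 <-] := hp k.
apply: le_esum => x _.
have [px|px] := ltP 0%R (p k x); last first.
  have -> : p k x = 0%R by apply/eqP; rewrite eq_le px p0.
  by apply: nneseries_ge0 => j _; rewrite mul0r.
have [j [xj Dj]] := D_child hp Dk px.
apply: (le_trans _ (@term_le_series R (fun j => (p k x * (nth 0 x j)%:R)%:E) (fun i => i \in D) j _ _)).
- by rewrite lee_fin ler_peMr // ?ler1n // ltW.
- by move=> i _; rewrite lee_fin mulr_ge0.
- by rewrite inE.
Qed.

Lemma vw_sum : \sum_(k <oo) ((v k)%:E * w k) = \sum_(j <oo | j \in D) (v j)%:E.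
Proof.
transitivity (\sum_(k <oo) \sum_(j <oo | j \in D) ((v k)%:E * meanM p k j)).
  apply: eq_eseriesr => k _; rewrite nneseriesZl //.
  by move=> i _; exact: meanM_ge0.
rewrite (@nneseries_interchange R (fun k j => (v k)%:E * meanM p k j) xpredT).
  apply: eq_eseriesr => j _; exact: hvM.
by move=> i j; rewrite mule_ge0 // ?lee_fin ?(ltW (hv0 _)) // meanM_ge0.
Qed.

Lemma w_ge0 k : 0 <= w k.
Proof. by apply: nneseries_ge0 => j _ _; exact: meanM_ge0. Qed.

Lemma vw_pt k : (if k \in D then v k else 0%R)%:E = (v k)%:E * w k.
Proof.
apply: (@series_eq_pt R (fun k => (if k \in D then v k else 0%R)%:E)
   (fun k => (v k)%:E * w k)).
- by move=> i; case: ifP => _; rewrite lee_fin ?lexx // ltW.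
- move=> i; case: ifP => Di.
    by rewrite lee_pemulr ?lee_fin ?(ltW (hv0 _)) // w_ge1 //; exact: set_mem.
  by rewrite mule_ge0 ?lee_fin ?(ltW (hv0 _)) // w_ge0.
- rewrite vw_sum eseries_mkcond; apply: eq_eseriesr => i _.
  by case: ifP.
- apply: (@le_lt_trans _ _ (\sum_(k <oo) (v k)%:E)); last by rewrite hv1 ltry.
  apply: lee_nneseries.
    by move=> i _ _; case: ifP => _; rewrite lee_fin ?lexx // ltW.
  by move=> i _; case: ifP => _; rewrite lee_fin ?lexx // ltW.
Qed.

Lemma w_out k : ~ D k -> w k = 0.
Proof.
move=> nDk; have := vw_pt k; rewrite ifF; last first.
  by apply/negP => /set_mem.
move=> /esym/eqP; rewrite mule_eq0 eqe (gt_eqF (hv0 k)) /= => /eqP //.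
Qed.

Lemma w_in k : D k -> w k = 1.
Proof.
move=> Dk; have := vw_pt k; rewrite ifT; last by apply: mem_set.
have := w_ge0 k; case: (w k) => [r| |] //= r0.
  rewrite -EFinM => /eqP; rewrite eqe => /eqP H; congr (_%:E).
  have v0 := hv0 k.
  have : (v k * (1 - r) = 0)%R by lra.
  move/eqP; rewrite mulf_eq0 (gt_eqF v0) /= subr_eq0 => /eqP; lra.
by rewrite gt0_muley // lte_fin.
Qed.

Lemma M_zero k j : ~ D k -> D j -> meanM p k j = 0.
Proof.
move=> nDk Dj; apply/eqP; rewrite eq_le meanM_ge0 andbT -(w_out k nDk).
apply: (@term_le_series R (fun j => meanM p k j) (fun i => i \in D) j).
  by move=> *; exact: meanM_ge0.
by apply: mem_set.
Qed.

Lemma Mn_zero n k j : ~ D k -> D j -> meanMn p n k j = 0.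
Proof.
move=> nDk; elim: n j => [|n IH] j Dj /=.
  rewrite (_ : (k == j) = false) //.
  by apply/negP => /eqP kj; apply: nDk; rewrite kj.
apply: eseries0 => l _ _.
have [Dl|nDl] := pselect (D l).
  by rewrite IH // mul0e.
by rewrite M_zero // mule0.
Qed.

Lemma D_all i0 : irreducible p -> D i0 -> forall k, D k.
Proof.
move=> hirr Di0 k; apply: contrapT => nDk.
have [n [_ ]] := hirr k i0.
by rewrite Mn_zero // ltxx.
Qed.

End Main.

End P6.
Import P6.

Module P7.
Local Open Scope classical_set_scope.
Local Open Scope ring_scope.

Lemma nth_le_sumn (x : seq nat) j : (nth 0%N x j <= sumn x)%N.
Proof.
elim: x j => [|a x IH] [|j] //=; first exact: leq_addr.
exact: leq_trans (IH j) (leq_addl _ _).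
Qed.

Section Final.
Variable R : realType.
Variable p : nat -> seq nat -> R.
Hypothesis hp : offspring_law p.
Variable v : nat -> R.
Hypothesis hv0 : forall j, 0 < v j.
Hypothesis hvM : forall j, (\sum_(i <oo) ((v i)%:E * meanM p i j))%E = (v j)%:E.
Hypothesis hv1 : (\sum_(j <oo) (v j)%:E)%E = 1%E.
Hypothesis hall : forall k, Dset R p k.

Local Open Scope ereal_scope.

Lemma inner_series k x :
  \sum_(j <oo | j \in Dset R p) (p k x * (nth 0 x j)%:R)%:E = (p k x * (sumn x)%:R)%:E.
Proof.
rewrite (@eq_eseriesl R _ xpredT); last by move=> j; rewrite /= mem_set.
rewrite (@series_fin R (fun j => p k x * (nth 0 x j)%:R)%R (size x)).
- by rewrite -mulr_sumr -natr_sum -sumn_ord.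
- by move=> j jx; rewrite nth_default // mulr0.
- by move=> j; rewrite mulr_ge0 //; case: (hp k).
Qed.

Lemma sumn1 k x : (0 < p k x)%R -> sumn x = 1%N.
Proof.
move=> px.
have E := @w_in R p hp v hv0 hvM hv1 k (hall k).
rewrite (@w_swap R p hp) in E.
rewrite (@eq_esum R _ setT _ (fun x => (p k x * (sumn x)%:R)%:E) (fun x _ => inner_series k x)) in E.
have [p0 p1] := hp k.
have := @esum_eq_pt R _ (fun x => (p k x)%:E) (fun x => (p k x * (sumn x)%:R)%:E).
move=> /(_ _ _ _ _ x) H.
have {H} H : (p k x)%:E = (p k x * (sumn x)%:R)%:E.
  apply: H.
  - by move=> y; rewrite lee_fin.
  - move=> y; rewrite lee_fin.
    have [py|py] := ltP 0%R (p k y); last first.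
      have -> : p k y = 0%R by apply/eqP; rewrite eq_le py p0.
      by rewrite mul0r.
    have [j [yj _]] := D_child hp (hall k) py.
    apply: ler_peMr; first exact: ltW.
    rewrite ler1n; exact: leq_trans yj (nth_le_sumn _ _).
  - by rewrite E p1.
  - by rewrite p1 ltry.
move: H => /eqP; rewrite eqe -subr_eq0 -{1}(mulr1 (p k x)) -mulrBr mulf_eq0 (gt_eqF px) /=.
by rewrite subr_eq0 eq_sym pnatr_eq1 => /eqP.
Qed.


Lemma Flin : F_linear p.
Proof.
move=> k s hs.
have hs' : s01 s by [].
have [p0 p1] := hp k.
rewrite (proj1 (genF_E hp k hs')) /meanM.
transitivity (\sum_(j <oo) \esum_(x in [set: seq nat]) ((s j * (p k x * (nth 0 x j)%:R))%R)%:E).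
  2: apply: eq_eseriesr => j _; rewrite muleC -esumZl //; first by case/andP: (hs j).
  2: by move=> x; rewrite lee_fin mulr_ge0.
rewrite (@esum_swapQ R _ xpredT); last first.
  by move=> x j; rewrite lee_fin mulr_ge0 // ?mulr_ge0 //; case/andP: (hs j).
apply: eq_esum => x _.
rewrite (@series_fin R (fun j => s j * (p k x * (nth 0 x j)%:R))%R (size x)); last 2 first.
- by move=> j jx; rewrite nth_default // mulr0 mulr0.
- by move=> j; rewrite mulr_ge0 // ?mulr_ge0 //; case/andP: (hs j).
congr (_%:E).
have [px|px] := ltP 0%R (p k x); last first.
  have -> : p k x = 0%R by apply/eqP; rewrite eq_le px p0.
  by rewrite mul0r big1 // => j _; rewrite mul0r mulr0.
rewrite (@prod_sum R x s (sumn1 k x px)) mulr_sumr; apply: eq_bigr => j _.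
by rewrite [RHS]mulrC -mulrA.
Qed.

End Final.

End P7.
Import P7.
Local Open Scope ring_scope.

Theorem lemma2 (R : realType) (p : nat -> seq nat -> R) :
  offspring_law p -> in_M1 p -> ~ F_linear p ->
  forall i : nat, exists n : nat, 0 < genFn p n i (fun _ => 0).
Proof.
move=> hp [hirr [_ [_ [_ [_ [heig _]]]]]] hnl i.
apply: contrapT => hno.
have Di : Dset R p i.
  move=> n; apply/eqP; rewrite eq_le; apply/andP; split; last first.
    by case/andP: (q01 hp n i).
  by rewrite leNgt; apply/negP => h; apply: hno; exists n.
have [v [u [hv0 [_ [hvM [_ [_ [hv1 _]]]]]]]] := heig.
have hall := @D_all R p hp v hv0 hvM hv1 i hirr Di.
exact: hnl (@Flin R p hp v hv0 hvM hv1 hall).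
Qed.
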